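(* Let $(X,\mathbf R)$ be a symmetric association scheme with $D$ classes, metric with respect to $A_0,\dots,A_D$. Fix $x\in X$, let $T=T(x)$, and let $t\in\{1,\dots,D\}$. For $\chi\in V$ the following are equivalent: (i) $\chi$ is orthogonal to every irreducible $T$-module $W\subseteq V$ with $1\le r(W)\le t$; (ii) $F\chi$ is a relative $t$-codesign with respect to $x$ for every $F\in T$. Moreover, if every irreducible $T$-module in $V$ with endpoint at most $t$ is thin, then the weaker condition ''$A_\ell\chi$ is a relative $t$-codesign with respect to $x$ for every $0\le\ell\le D$'' already implies (i) (and hence (ii)).
   Context: $(X,\mathbf R)$ is a symmetric association scheme with associate matrices $A_0=I,\dots,A_D$, Bose–Mesner algebra $M$, primitive idempotents $E_0=|X|^{-1}J,\dots,E_D$. Metric with respect to $A_0,\dots,A_D$ means $(X,R_1)$ is a distance-regular graph with $R_i$ its distance-$i$ relation. $V=\mathbb C^X$ with standard basis $\{\hat y\}$ and standard Hermitian inner product. For $x\in X$: $E_i^*(x)$ is diagonal with $(E_i^*(x))_{yy}=(A_i)_{xy}$; $A_i^*(x)$ is diagonal with $(A_i^*(x))_{yy}=|X|(E_i)_{xy}$; the Terwilliger algebra $T(x)$ is the subalgebra of $\mathrm{Mat}_X(\mathbb C)$ generated by $M$ and the $A_i^*(x)$ (equivalently the $E_i^*(x)$). For an irreducible $T(x)$-module $W\subseteq V$, its endpoint is $r(W)=\min\{i:E_i^*(x)W\ne0\}$, and $W$ is thin if $\dim E_i^*(x)W\le 1$ for all $i$. A vector $\psi$ is a relative $t$-codesign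 with respect to $x$ if $E_i^*(x)\psi$ and $A_i\hat x$ are linearly dependent for all $1\le i\le t$. *)

(* Defs.v *)
From HB Require Import structures.
From mathcomp Require Import all_boot all_order all_algebra.
Set Implicit Arguments. Unset Strict Implicit. Unset Printing Implicit Defensive.
Import Order.TTheory GRing.Theory Num.Theory.
Local Open Scope ring_scope.

(* Points of X are 'I_n; V = C^X is 'cV[C]_n; matrices in Mat_X(C) are 'M[C]_n.
   C is any numeric algebraically closed field (e.g. the complex numbers). *)

Section Scheme.
Variables (C : numClosedFieldType) (n D : nat).

Definition is_symmetric_scheme (A : 'I_D.+1 -> 'M[C]_n) : Prop :=
  [/\ (forall i y z, A i y z = 0 \/ A i y z = 1),
      A ord0 = 1%:M /\ \sum_i A i = const_mx 1,
      (forall i, (A i)^T = A i),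
      (forall i, A i != 0) &
      (forall i j, exists c : 'I_D.+1 -> C, A i *m A j = \sum_k c k *: A k)].

Definition mxpow (M : 'M[C]_n) (k : nat) : 'M[C]_n := iter k (mulmx M) 1%:M.

(* Metric: R_i is the distance-i relation of the graph (X, R_1):
   y ~_i z iff there is a walk of length i in R_1 from y to z but none shorter. *)
Definition is_metric (A : 'I_D.+1 -> 'M[C]_n) : Prop :=
  forall (i : 'I_D.+1) y z,
    A i y z = 1 <->
    (mxpow (A (inord 1)) i y z != 0 /\
     forall k, (k < i)%N -> mxpow (A (inord 1)) k y z = 0).

Definition dualE (A : 'I_D.+1 -> 'M[C]_n) (x : 'I_n) (i : 'I_D.+1) : 'M[C]_n :=
  diag_mx (row x (A i)).

Inductive inT (A : 'I_D.+1 -> 'M[C]_n) (x : 'I_n) : 'M[C]_n -> Prop :=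
  | inT_A i : inT A x (A i)
  | inT_dualE i : inT A x (dualE A x i)
  | inT_1 : inT A x 1%:M
  | inT_add F G : inT A x F -> inT A x G -> inT A x (F + G)
  | inT_scale (c : C) F : inT A x F -> inT A x (c *: F)
  | inT_mul F G : inT A x F -> inT A x G -> inT A x (F *m G).

Definition subspace (W : 'cV[C]_n -> Prop) : Prop :=
  [/\ W 0, (forall u v, W u -> W v -> W (u + v)) &
      (forall (c : C) u, W u -> W (c *: u))].

Definition Tmodule A x (W : 'cV[C]_n -> Prop) : Prop :=
  subspace W /\ (forall F w, inT A x F -> W w -> W (F *m w)).

Definition irreducible_Tmodule A x (W : 'cV[C]_n -> Prop) : Prop :=
  [/\ Tmodule A x W,
      (exists w, W w /\ w != 0) &
      (forall U, Tmodule A x U -> (forall u, U u -> W u) ->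
         (forall u, U u -> u = 0) \/ (forall w, W w -> U w))].

Definition hdot (u v : 'cV[C]_n) : C := \sum_y u y 0 * (v y 0)^*.

Definition orthogonal_to (chi : 'cV[C]_n) (W : 'cV[C]_n -> Prop) : Prop :=
  forall w, W w -> hdot w chi = 0.

Definition is_endpoint A x (W : 'cV[C]_n -> Prop) (r : 'I_D.+1) : Prop :=
  (exists w, W w /\ dualE A x r *m w != 0) /\
  (forall i : 'I_D.+1, (i < r)%N -> forall w, W w -> dualE A x i *m w = 0).

Definition lin_dep2 (u v : 'cV[C]_n) : Prop :=
  exists a b : C, (a != 0 \/ b != 0) /\ a *: u + b *: v = 0.

(* thin: dim E_i^* W <= 1 for all i, i.e. any two vectors of E_i^* W are dependent. *)
Definition thin A x (W : 'cV[C]_n -> Prop) : Prop :=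
  forall i u v, W u -> W v -> lin_dep2 (dualE A x i *m u) (dualE A x i *m v).

Definition xhat (x : 'I_n) : 'cV[C]_n := delta_mx x 0.

Definition relative_codesign A x (t : nat) (psi : 'cV[C]_n) : Prop :=
  forall i : 'I_D.+1, (1 <= i <= t)%N ->
    lin_dep2 (dualE A x i *m psi) (A i *m xhat x).

End Scheme.

(* Main.v *)
Require Import Defs.
From HB Require Import structures.
From mathcomp Require Import all_boot all_order all_algebra.
Import Order.TTheory GRing.Theory Num.Theory.
Local Open Scope ring_scope.
Set Implicit Arguments. Unset Strict Implicit.
From Stdlib Require Import Classical.
From mathcomp Require Import zify.

Section LA.
Variables (C : numClosedFieldType) (n : nat).
Implicit Types (u v w : 'cV[C]_n).

Lemma hdotDl u v w : hdot (u + v) w = hdot u w + hdot v w.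
Proof. by rewrite /hdot -big_split; apply: eq_bigr => y _; rewrite mxE mulrDl. Qed.
Lemma hdotZl (c : C) u w : hdot (c *: u) w = c * hdot u w.
Proof. by rewrite /hdot mulr_sumr; apply: eq_bigr => y _; rewrite mxE mulrA. Qed.
Lemma hdotDr u v w : hdot w (u + v) = hdot w u + hdot w v.
Proof. by rewrite /hdot -big_split; apply: eq_bigr => y _; rewrite mxE rmorphD mulrDr. Qed.
Lemma hdotZr (c : C) u w : hdot w (c *: u) = c^* * hdot w u.
Proof. by rewrite /hdot mulr_sumr; apply: eq_bigr => y _; rewrite mxE rmorphM mulrCA. Qed.
Lemma hdot0l u : hdot 0 u = 0.
Proof. by rewrite /hdot big1 // => y _; rewrite mxE mul0r. Qed.
Lemma hdot0r u : hdot u 0 = 0.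
Proof. by rewrite /hdot big1 // => y _; rewrite mxE rmorph0 mulr0. Qed.
Lemma hdotNl u w : hdot (- u) w = - hdot u w.
Proof. by rewrite -scaleN1r hdotZl mulN1r. Qed.
Lemma hdotBl u v w : hdot (u - v) w = hdot u w - hdot v w.
Proof. by rewrite hdotDl hdotNl. Qed.
Lemma hdotNr u w : hdot w (- u) = - hdot w u.
Proof. by rewrite -scaleN1r hdotZr rmorphN1 mulN1r. Qed.
Lemma hdotBr u v w : hdot w (u - v) = hdot w u - hdot w v.
Proof. by rewrite hdotDr hdotNr. Qed.
Lemma hdot_conj u v : hdot u v = (hdot v u)^*.
Proof. by rewrite /hdot rmorph_sum; apply: eq_bigr => y _; rewrite rmorphM /= conjCK mulrC. Qed.
Lemma hdot_eq0 u : hdot u u = 0 -> u = 0.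
Proof.
move=> h; apply/matrixP => y j; rewrite (ord1 j) mxE.
have: forall z, z \in [pred _ | true] -> 0 <= u z 0 * (u z 0)^* by move=> z _; rewrite mul_conjC_ge0.
move/psumr_eq0P => /(_ h y isT) /eqP; rewrite mul_conjC_eq0 => /eqP //.
Qed.

Definition adj (F : 'M[C]_n) : 'M[C]_n := map_mx (@Num.conj C) F^T.
Lemma hdot_adj F u v : hdot (F *m u) v = hdot u (adj F *m v).
Proof.
rewrite /hdot; under eq_bigr do rewrite mxE big_distrl /=.
rewrite exchange_big /=; apply: eq_bigr => z _.
rewrite mxE rmorph_sum mulr_sumr; apply: eq_bigr => y _.
by rewrite !mxE rmorphM /= (conjCK (F y z)) mulrCA mulrA. Qed.
Lemma adjD F G : adj (F + G) = adj F + adj G.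
Proof. by rewrite /adj linearD /= map_mxD. Qed.
Lemma adjZ c F : adj (c *: F) = c^* *: adj F.
Proof. by rewrite /adj linearZ /= map_mxZ. Qed.
Lemma adjM F G : adj (F *m G) = adj G *m adj F.
Proof. by rewrite /adj trmx_mul map_mxM. Qed.
Lemma adj1 : adj 1%:M = 1%:M.
Proof. by rewrite /adj trmx1 map_mx1. Qed.
End LA.

Section Span.
Variables (C : numClosedFieldType) (n : nat).
Implicit Types (u v w : 'cV[C]_n) (s : seq 'cV[C]_n).

Fixpoint inspan s v : Prop :=
  match s with [::] => v = 0 | u :: s' => exists c a, inspan s' a /\ v = c *: u + a end.

Lemma inspan0 s : inspan s 0.
Proof. by elim: s => [|u s IH] //=; exists 0, 0; rewrite scale0r addr0. Qed.
Lemma inspanD s v w : inspan s v -> inspan s w -> inspan s (v + w).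
Proof.
elim: s v w => [|u s IH] v w /=; first by move=> -> ->; rewrite addr0.
move=> [c [a [Ha ->]]] [c' [a' [Ha' ->]]]; exists (c + c'), (a + a'); split; first exact: IH.
by rewrite scalerDl addrACA.
Qed.
Lemma inspanZ s k v : inspan s v -> inspan s (k *: v).
Proof.
elim: s v => [|u s IH] v /=; first by move=> ->; rewrite scaler0.
move=> [c [a [Ha ->]]]; exists (k * c), (k *: a); split; first exact: IH.
by rewrite scalerDr scalerA.
Qed.
Lemma inspanB s v w : inspan s v -> inspan s w -> inspan s (v - w).
Proof. by move=> h1 h2; apply: inspanD => //; rewrite -scaleN1r; apply: inspanZ. Qed.

Lemma orth_span s w : (forall b, inspan s b -> hdot w b = 0) -> True. Proof. by []. Qed.

Lemma orth_dec s v : exists a, inspan s a /\ forall b, inspan s b -> hdot (v - a) b = 0.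
Proof.
elim: s v => [|u s IH] v.
  by exists 0; split => //= b ->; rewrite hdot0r.
have [a1 [Ha1 H1]] := IH v; have [b [Hb H2]] := IH u.
set u' := u - b; set r := v - a1.
have [Hu0|Hu0] := eqVneq (hdot u' u') 0.
  have ub : u = b by apply/eqP; rewrite -subr_eq0; apply/eqP/hdot_eq0.
  exists a1; split; first by exists 0, a1; rewrite scale0r add0r.
  move=> _ [c [b' [Hb' ->]]]; rewrite hdotDr hdotZr ub (H1 _ Hb) (H1 _ Hb') mulr0 addr0 //.
set k := hdot r u' / hdot u' u'.
exists (k *: u + (a1 - k *: b)); split.
  exists k, (a1 - k *: b); split => //; apply: inspanB => //; exact: inspanZ.
have E : v - (k *: u + (a1 - k *: b)) = r - k *: u'.
  by rewrite /r /u' scalerBr !opprD !opprK !addrA [v - _ - a1]addrAC.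
have Hs : forall b', inspan s b' -> hdot (r - k *: u') b' = 0.
  by move=> b' Hb'; rewrite hdotBl hdotZl (H1 _ Hb') (H2 _ Hb') mulr0 subr0.
move=> _ [c [b' [Hb' ->]]]; rewrite E hdotDr hdotZr (Hs _ Hb') addr0.
have -> : u = u' + b by rewrite /u' subrK.
rewrite hdotDr (Hs _ Hb) addr0 hdotBl hdotZl /k mulfVK // subrr mulr0 //.
Qed.

Lemma orth_inspan s w : (forall b, inspan s b -> hdot w b = 0) -> True. Proof. by []. Qed.

Fixpoint Ms s : 'M[C]_n := if s is u :: s' then (u^T + Ms s')%MS else 0.

Lemma inspan_Ms s v : inspan s v <-> (v^T <= Ms s)%MS.
Proof.
elim: s v => [|u s IH] v /=.
  split; first by move=> ->; rewrite trmx0 sub0mx.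
  by rewrite submx0 => /eqP /(congr1 trmx); rewrite trmxK trmx0.
split.
  move=> [c [a [Ha ->]]]; rewrite linearD /= linearZ /=.
  by apply: addmx_sub_adds; [apply: scalemx_sub; apply: submx_refl | apply/IH].
move/sub_addsmxP => [[p1 p2] /= E].
exists (p1 0 0), (p2 *m Ms s)^T; split; first by apply/IH; rewrite trmxK submxMl.
apply: trmx_inj; rewrite E linearD /= linearZ /= trmxK; congr (_ + _).
by rewrite {1}(mx11_scalar p1) mul_scalar_mx.
Qed.

Lemma span_exists (W : 'cV[C]_n -> Prop) : subspace W ->
  exists s, forall v, W v <-> inspan s v.
Proof.
move=> [W0 WD WZ].
have Wspan : forall s, (forall u, u \in s -> W u) -> forall v, inspan s v -> W v.
  elim=> [|u s IH] Hs v /=; first by move->.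
  move=> [c [a [Ha ->]]]; apply: WD; first by apply: WZ; apply: Hs; rewrite mem_head.
  by apply: IH => // z zs; apply: Hs; rewrite in_cons zs orbT.
suff: forall k s, (n - \rank (Ms s) <= k)%N -> (forall u, u \in s -> W u) ->
  exists s', forall v, W v <-> inspan s' v.
  by move/(_ n [::]); apply => //; rewrite leq_subr.
have step : forall s, (forall u, u \in s -> W u) ->
    (exists s', forall v, W v <-> inspan s' v) \/
    exists v, (\rank (Ms s) < \rank (Ms (v :: s)))%N /\ (forall u, u \in v :: s -> W u).
  move=> s Hs; case: (classic (forall v, W v -> inspan s v)) => [Hall|Hn].
    by left; exists s; move=> v; split; [apply: Hall | apply: Wspan].
  have [v Hv] := not_all_ex_not _ _ Hn; have [Wv Nv] := imply_to_and _ _ Hv.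
  right; exists v; split; last by move=> u; rewrite in_cons => /orP [/eqP ->|]; [exact: Wv | exact: Hs].
  have H1 : (Ms s <= Ms (v :: s))%MS by rewrite /= addsmxSr.
  have : (Ms s < Ms (v :: s))%MS.
    rewrite ltmxE H1 /= addsmx_sub submx_refl andbT; apply/negP => /inspan_Ms; exact: Nv.
  by rewrite ltmxErank => /andP [].
elim=> [|k IH] s Hk Hs; case: (step s Hs) => [//|[v [Hlt Hs']]];
  have Hr := rank_leq_col (Ms (v :: s)).
  by exfalso; move: Hk; rewrite leqn0 subn_eq0 => Hk; have := leq_ltn_trans Hk Hlt; rewrite ltnNge Hr.
apply: (IH (v :: s)) => //.
move: Hk Hlt Hr; lia.
Qed.

Lemma Ms_sub s1 s2 : (forall v, inspan s1 v -> inspan s2 v) -> (Ms s1 <= Ms s2)%MS.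
Proof.
elim: s1 => [|u s1 IH] H /=; first by rewrite sub0mx.
rewrite addsmx_sub; apply/andP; split.
  by apply/inspan_Ms; apply: H; exists 1, 0; rewrite scale1r addr0; split => //; apply: inspan0.
apply: IH => v Hv; apply: H; exists 0, v; split => //; by rewrite scale0r add0r.
Qed.

End Span.

Section Min.
Variables (C : numClosedFieldType) (n D : nat) (A : 'I_D.+1 -> 'M[C]_n) (x : 'I_n).
Hypothesis HadjT : forall F, inT A x F -> inT A x (adj F).

Lemma hdot_neq0 (w p : 'cV[C]_n) : hdot w p != 0 -> w != 0.
Proof. by apply: contraNneq => ->; rewrite hdot0l. Qed.

Definition MinConcl (W : 'cV[C]_n -> Prop) p := exists W', [/\ irreducible_Tmodule A x W', (forall u, W' u -> W u) &
                 exists w, W' w /\ hdot w p != 0].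

Lemma Min_step (W : 'cV[C]_n -> Prop) s p :
  (forall (W2 : 'cV[C]_n -> Prop) s2, (\rank (Ms s2) < \rank (Ms s))%N -> (forall v, W2 v <-> inspan s2 v) ->
      Tmodule A x W2 -> (exists w, W2 w /\ hdot w p != 0) -> MinConcl W2 p) ->
  (forall v, W v <-> inspan s v) ->
  Tmodule A x W -> (exists w, W w /\ hdot w p != 0) -> MinConcl W p.
Proof.
move=> IH Hs HW [w [Ww Hwp]].
have [[W0 WD WZ] WT] := HW.
case: (classic (irreducible_Tmodule A x W)) => [Hirr|Hnirr].
  by exists W; split => //; exists w.
have [U HU] : exists U, ~ (Tmodule A x U -> (forall u, U u -> W u) ->
         (forall u, U u -> u = 0) \/ (forall w, W w -> U w)).
  apply: not_all_ex_not => Hall; apply: Hnirr; split => //; exists w; split => //.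
  exact: hdot_neq0 Hwp.
have [TU HU1] := imply_to_and _ _ HU; have [UW HU2] := imply_to_and _ _ HU1.
have [HU0 HUW] := not_or_and _ _ HU2.
have [u0 Hu0] := not_all_ex_not _ _ HU0; have [Uu0 u0n] := imply_to_and _ _ Hu0.
have [w1 Hw1] := not_all_ex_not _ _ HUW; have [Ww1 Uw1] := imply_to_and _ _ Hw1.
have [sU HsU] := span_exists (proj1 TU).
have sUs : (Ms sU <= Ms s)%MS by apply: Ms_sub => v /HsU /UW /Hs.
have ltU : (\rank (Ms sU) < \rank (Ms s))%N.
  have : (Ms sU < Ms s)%MS.
    rewrite ltmxE sUs /=; apply/negP => /(submx_trans (proj1 (inspan_Ms s w1) (proj1 (Hs w1) Ww1))).
    move/inspan_Ms/HsU; exact: Uw1.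
  by rewrite ltmxErank => /andP [].
pose U' := fun v => W v /\ forall u, U u -> hdot v u = 0.
have TU' : Tmodule A x U'.
  split; first split.
  - split; [exact: W0 | by move=> u _; rewrite hdot0l].
  - move=> a b [Wa Ha] [Wb Hb]; split; first exact: WD.
    by move=> u Uu; rewrite hdotDl Ha ?Hb ?addr0.
  - move=> c a [Wa Ha]; split; first exact: WZ.
    by move=> u Uu; rewrite hdotZl Ha ?mulr0.
  - move=> F a HF [Wa Ha]; split; first exact: WT.
    move=> u Uu; rewrite hdot_adj; apply: Ha; exact: (proj2 TU) _ _ (HadjT HF) Uu.
have [sU' HsU'] := span_exists (proj1 TU').
have sU's : (Ms sU' <= Ms s)%MS by apply: Ms_sub => v /HsU' [] /Hs.
have ltU' : (\rank (Ms sU') < \rank (Ms s))%N.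
  have : (Ms sU' < Ms s)%MS.
    rewrite ltmxE sU's /=; apply/negP => /(submx_trans (proj1 (inspan_Ms s u0) (proj1 (Hs u0) (UW _ Uu0)))).
    move/inspan_Ms/HsU' => [_ /(_ u0 Uu0) /hdot_eq0]; exact: u0n.
  by rewrite ltmxErank => /andP [].
case: (classic (exists u, U u /\ hdot u p != 0)) => [HUp|HUp].
  have [W' [H1 H2 H3]] := IH U sU ltU HsU TU HUp.
  by exists W'; split => // v /H2 /UW.
have HUp' : forall u, U u -> hdot u p = 0.
  move=> u Uu; apply: NNPP => h; apply: HUp; exists u; split => //; exact/eqP.
have [a [Ha Hor]] := orth_dec sU w.
have Ua : U a by apply/HsU.
have HU'p : exists v, U' v /\ hdot v p != 0.
  exists (w - a); split.
    split; first by apply: WD => //; rewrite -scaleN1r; apply: WZ; exact: UW.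
    by move=> u /HsU; exact: Hor.
  by rewrite hdotBl (HUp' _ Ua) subr0.
have [W' [H1 H2 H3]] := IH U' sU' ltU' HsU' TU' HU'p.
by exists W'; split => // v /H2 [].
Qed.

Lemma Min (W : 'cV[C]_n -> Prop) p : Tmodule A x W -> (exists w, W w /\ hdot w p != 0) ->
  MinConcl W p.
Proof.
move=> HW Hp; have [s Hs] := span_exists (proj1 HW).
move: (leqnn (\rank (Ms s))); move: {2}(\rank (Ms s)) => k.
elim: k W s Hs HW Hp => [|k IH] W s Hs HW Hp Hk; apply: (Min_step _ Hs HW Hp).
  by move=> W2 s2; rewrite leqn0 in Hk; rewrite (eqP Hk).
move=> W2 s2 lt2 Hs2 HW2 Hp2; apply: (IH W2 s2) => //; move: lt2 Hk; lia.
Qed.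
End Min.

Section Scheme.
Variables (C : numClosedFieldType) (n D : nat) (A : 'I_D.+1 -> 'M[C]_n) (x : 'I_n).
Hypothesis HS : is_symmetric_scheme A.

Lemma A01 i y z : A i y z = 0 \/ A i y z = 1.
Proof. by case: HS. Qed.
Lemma A0E : A ord0 = 1%:M.
Proof. by case: HS => _ []. Qed.
Lemma Asym i y z : A i y z = A i z y.
Proof. by case: HS => _ _ Hs _ _; rewrite -{1}(Hs i) mxE. Qed.
Lemma Asum y z : \sum_i A i y z = 1.
Proof. by case: HS => _ [_ Hs] _ _ _; rewrite -summxE Hs mxE. Qed.
Lemma Aprod i j : exists c : 'I_D.+1 -> C, A i *m A j = \sum_k c k *: A k.
Proof. by case: HS. Qed.
Lemma Anz i : A i != 0.
Proof. by case: HS. Qed.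
Lemma A_ge0 i y z : 0 <= A i y z.
Proof. by case: (A01 i y z) => ->; rewrite ?lexx ?ler01. Qed.

Lemma Aex y z : exists i, A i y z = 1.
Proof.
apply: NNPP => h; have: \sum_i A i y z = 0.
  apply: big1 => i _; case: (A01 i y z) => // e; exfalso; apply: h; by exists i.
by rewrite Asum; apply/eqP; rewrite oner_eq0.
Qed.

Lemma Auniq i j y z : A i y z = 1 -> A j y z = 1 -> i = j.
Proof.
move=> hi hj; apply/eqP; apply: contraT => ij.
have := Asum y z; rewrite (bigD1 i) //= (bigD1 j) /=; last by rewrite eq_sym.
rewrite hi hj addrA => E.
have : 0 <= \sum_(k | (k != i) && (k != j)) A k y z by apply: sumr_ge0 => k _; exact: A_ge0.
have -> : \sum_(k | (k != i) && (k != j)) A k y z = - 1.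
  by apply/(addrI (1 + 1)); rewrite E addrK.
by rewrite oppr_ge0 ler10.
Qed.

Definition dd y z : 'I_D.+1 := odflt ord0 [pick i | A i y z == 1].
Lemma ddP y z : A (dd y z) y z = 1.
Proof.
rewrite /dd; case: pickP => [i /eqP //|h]; exfalso.
have [i hi] := Aex y z; by move: (h i); rewrite hi eqxx.
Qed.
Lemma AE i y z : A i y z = (dd y z == i)%:R.
Proof.
have [<-|ne] := eqVneq (dd y z) i; first by rewrite ddP.
case: (A01 i y z) => // h; exfalso; move/eqP: ne; apply; exact: Auniq (ddP y z) h.
Qed.
Lemma dd_sym y z : dd y z = dd z y.
Proof. by apply: (Auniq (ddP y z)); rewrite Asym ddP. Qed.
Lemma dd0 y z : (dd y z == ord0) = (y == z).
Proof.
have := AE ord0 y z; rewrite A0E mxE => /eqP; rewrite eq_sym.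
by case: (y == z); case: (dd y z == ord0); rewrite //= ?oner_eq0 // eq_sym oner_eq0.
Qed.

Definition Es (k : nat) : 'M[C]_n := diag_mx (\row_y ((dd x y == k :> nat)%:R : C)).
Definition a (j : 'I_D.+1) : 'cV[C]_n := A j *m xhat C x.

Lemma EsE k (M : 'cV[C]_n) y : (Es k *m M) y 0 = (dd x y == k :> nat)%:R * M y 0.
Proof. by rewrite mul_diag_mx !mxE. Qed.
Lemma aE j y : a j y 0 = (dd x y == j :> nat)%:R.
Proof.
rewrite /a /xhat mxE (bigD1 x) //= big1 ?addr0.
  by rewrite mxE !eqxx mulr1 AE dd_sym.
by move=> z zx; rewrite mxE (negbTE zx) mulr0.
Qed.
Lemma dualE_Es i : dualE A x i = Es i.
Proof. by rewrite /dualE /Es; congr diag_mx; apply/rowP => y; rewrite !mxE AE. Qed.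

Lemma adjA i : adj (A i) = A i.
Proof. by apply/matrixP => y z; rewrite !mxE AE rmorph_nat dd_sym -AE. Qed.
Lemma adjEs k : adj (Es k) = Es k.
Proof.
apply/matrixP => y z; rewrite !mxE; case: (y =P z) => [->|ne].
  by rewrite eqxx !mulr1n rmorph_nat.
have e1 : (y == z) = false by apply/eqP.
have e2 : (z == y) = false by apply/eqP => h; apply: ne.
by rewrite ?e1 ?e2 !mulr0n rmorph0.
Qed.

Lemma HadjT F : inT A x F -> inT A x (adj F).
Proof.
elim=> [i|i||F1 G1 _ h1 _ h2|c F1 _ h|F1 G1 _ h1 _ h2].
- by rewrite adjA; constructor.
- by rewrite dualE_Es adjEs -dualE_Es; constructor.
- by rewrite adj1; constructor.
- by rewrite adjD; constructor.
- by rewrite adjZ; constructor.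
- by rewrite adjM; constructor.
Qed.

Lemma hdot_adj' (F : 'M[C]_n) u v : hdot u (F *m v) = hdot (adj F *m u) v.
Proof. by rewrite hdot_conj hdot_adj -hdot_conj. Qed.

Lemma hdot_Es k u v : hdot (Es k *m u) v = hdot u (Es k *m v).
Proof. by rewrite hdot_adj adjEs. Qed.

Lemma Es_sum (u : 'cV[C]_n) : u = \sum_(i < D.+1) Es i *m u.
Proof.
apply/matrixP => y j; rewrite (ord1 j) summxE.
under eq_bigr do rewrite EsE.
rewrite (bigD1 (dd x y)) //= eqxx mul1r big1 ?addr0 // => i ne.
case: eqP => [/val_inj h|_]; [by rewrite h eqxx in ne | by rewrite mul0r].
Qed.

Lemma hdot_Es_sum u v : hdot u v = \sum_(i < D.+1) hdot (Es i *m u) v.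
Proof.
by rewrite {1}(Es_sum u) (big_morph (fun w => hdot w v) (fun a b => hdotDl a b v) (hdot0l v)).
Qed.

Lemma EsEs j k (u : 'cV[C]_n) : Es j *m (Es k *m u) = if j == k then Es k *m u else 0.
Proof.
apply/matrixP => y z; rewrite (ord1 z) !EsE; case: ifP => [/eqP ->|ne].
  by rewrite EsE mulrA -natrM mulnb andbb.
rewrite mxE mulrA -natrM mulnb.
case: eqP => [e|_]; last by rewrite mul0r.
case: eqP => [e2|_]; last by rewrite mul0r.
by move: ne; rewrite -e -e2 eqxx.
Qed.

Lemma Es_a k j : Es k *m a j = if k == j then a j else 0.
Proof.
apply/matrixP => y z; rewrite (ord1 z) EsE aE; case: ifP => [/eqP e|ne].
  by rewrite aE -e -natrM mulnb andbb.
rewrite mxE -natrM mulnb.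
case: eqP => [e|_]; last by [].
case: eqP => [e2|_]; last by rewrite andbF.
by move: ne; rewrite -e e2 eqxx.
Qed.

Lemma hdot_xhat (u : 'cV[C]_n) : hdot u (xhat C x) = u x 0.
Proof.
rewrite /hdot (bigD1 x) //= big1 ?addr0; first by rewrite mxE !eqxx rmorph1 mulr1.
by move=> y yx; rewrite mxE (negbTE yx) rmorph0 mulr0.
Qed.

Lemma aDef j : a j = A j *m xhat C x. Proof. by []. Qed.

Lemma a0 : a ord0 = xhat C x.
Proof. by rewrite /a A0E mul1mx. Qed.

Lemma Es0 (u : 'cV[C]_n) : (Es 0 *m u) x 0 = u x 0.
Proof. by rewrite EsE; have := dd0 x x; rewrite eqxx => /eqP ->; rewrite mul1r. Qed.

End Scheme.

Lemma ex_min (P : nat -> Prop) k : P k -> exists r, P r /\ forall j, (j < r)%N -> ~ P j.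
Proof.
elim: k {-2}k (leqnn k) => [|k IH] m Hm Pm.
  by exists m; split => // j; move: Hm; rewrite leqn0 => /eqP ->.
case: (classic (exists j, (j < m)%N /\ P j)) => [[j [jm Pj]]|h].
  by apply: (IH j) => //; move: jm Hm; lia.
by exists m; split => // j jm Pj; apply: h; exists j.
Qed.

Section Part1.
Variables (C : numClosedFieldType) (n D : nat) (A : 'I_D.+1 -> 'M[C]_n) (x : 'I_n) (t : nat).
Hypothesis HS : is_symmetric_scheme A.
Hypothesis Ht : (1 <= t <= D)%N.
Local Notation a := (a A x).
Local Notation Es := (Es A x).
Local Notation xh := (xhat C x).

Definition inMx (u : 'cV[C]_n) := exists c : 'I_D.+1 -> C, u = \sum_j c j *: a j.
Lemma inMx0 : inMx 0.
Proof. by exists (fun _ => 0); rewrite big1 // => j _; rewrite scale0r. Qed.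
Lemma inMxD u v : inMx u -> inMx v -> inMx (u + v).
Proof.
move=> [c ->] [c' ->]; exists (fun j => c j + c' j); rewrite -big_split.
by apply: eq_bigr => j _; rewrite scalerDl.
Qed.
Lemma inMxZ k u : inMx u -> inMx (k *: u).
Proof.
move=> [c ->]; exists (fun j => k * c j); rewrite scaler_sumr.
by apply: eq_bigr => j _; rewrite scalerA.
Qed.
Lemma inMx_sum (I : finType) (f : I -> 'cV[C]_n) : (forall i, inMx (f i)) -> inMx (\sum_i f i).
Proof. by move=> h; apply: big_ind => //; [exact: inMx0 | exact: inMxD]. Qed.
Lemma inMx_a j : inMx (a j).
Proof.
exists (fun k => (k == j)%:R); rewrite (bigD1 j) //= eqxx scale1r big1 ?addr0 // => k kj.
by rewrite (negbTE kj) scale0r.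
Qed.
Lemma inMx_Aa i j : inMx (A i *m a j).
Proof.
have [c Hc] := Aprod HS i j.
rewrite aDef mulmxA Hc mulmx_suml; apply: inMx_sum => k.
by rewrite -scalemxAl; apply: inMxZ; apply: inMx_a.
Qed.
Lemma inMx_T F : inT A x F -> forall u, inMx u -> inMx (F *m u).
Proof.
elim=> [i|i||F1 G1 _ h1 _ h2|c F1 _ h|F1 G1 _ h1 _ h2] u Hu.
- move: Hu => [c ->]; rewrite mulmx_sumr; apply: inMx_sum => j.
  by rewrite -scalemxAr; apply: inMxZ; apply: inMx_Aa.
- move: Hu => [c ->]; rewrite dualE_Es // mulmx_sumr; apply: inMx_sum => j.
  rewrite -scalemxAr; apply: inMxZ; rewrite Es_a //; case: ifP => _; [exact: inMx_a | exact: inMx0].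
- by rewrite mul1mx.
- by rewrite mulmxDl; apply: inMxD; [apply: h1 | apply: h2].
- by rewrite -scalemxAl; apply: inMxZ; apply: h.
- by rewrite -mulmxA; apply: h1; apply: h2.
Qed.

Lemma hdot_inMx v u : (forall j, hdot v (a j) = 0) -> inMx u -> hdot v u = 0.
Proof.
move=> H [c ->]; rewrite (big_morph (fun w => hdot v w) (fun p q => hdotDr p q v) (hdot0r v)).
by apply: big1 => j _; rewrite hdotZr H mulr0.
Qed.

Definition Nv (v : 'cV[C]_n) := (forall j, hdot v (a j) = 0) /\
  (forall k : 'I_D.+1, (k == 0 :> nat) || (t < k)%N -> Es k *m v = 0).
Definition S (u : 'cV[C]_n) := forall F v, inT A x F -> Nv v -> hdot (F *m v) u = 0.
Definition Sperp (u : 'cV[C]_n) := forall s, S s -> hdot u s = 0.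

Lemma xh_S : S xh.
Proof.
move=> F v HF [Hv _]; rewrite hdot_adj; apply: hdot_inMx => //.
apply: inMx_T; first exact: HadjT.
by rewrite -(a0 x HS); apply: inMx_a.
Qed.

Lemma S_T s G : S s -> inT A x G -> S (G *m s).
Proof.
move=> Hs HG F v HF Hv; rewrite hdot_adj' mulmxA; apply: Hs => //.
by constructor => //; apply: HadjT.
Qed.

Lemma S_sub : subspace S.
Proof.
split.
- by move=> F v _ _; rewrite hdot0r.
- by move=> u w Hu Hw F v HF Hv; rewrite hdotDr Hu ?Hw ?addr0.
- by move=> c u Hu F v HF Hv; rewrite hdotZr Hu ?mulr0.
Qed.

Lemma Sperp_T : Tmodule A x Sperp.
Proof.
split; first split.
- by move=> s _; rewrite hdot0l.
- by move=> u w Hu Hw s Hs; rewrite hdotDl Hu ?Hw ?addr0.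
- by move=> c u Hu s Hs; rewrite hdotZl Hu ?mulr0.
- by move=> F u HF Hu s Hs; rewrite hdot_adj; apply: Hu; apply: S_T => //; apply: HadjT.
Qed.

Lemma Es_a0 (i : 'I_D.+1) (psi : 'cV[C]_n) : a i = 0 -> Es i *m psi = 0.
Proof.
move=> h; apply/matrixP => y z; rewrite (ord1 z) EsE.
by have := aE x HS i y; rewrite h mxE => <-; rewrite mul0r ?mxE.
Qed.

Lemma dep_span (i : 'I_D.+1) (psi : 'cV[C]_n) : lin_dep2 (Es i *m psi) (a i) -> exists c, Es i *m psi = c *: a i.
Proof.
move=> [al [be [nz E]]].
have [al0|al0] := eqVneq al 0.
  move: nz E; rewrite al0 scale0r add0r => [[]]; rewrite ?eqxx // => be0 /eqP.
  rewrite scaler_eq0 (negbTE be0) /= => /eqP h; exists 0; rewrite scale0r; exact: Es_a0.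
exists (- (be / al)); apply: (scalerI al0); rewrite scalerA mulrN mulrCA mulfV // mulr1.
by apply/eqP; rewrite -subr_eq0 scaleNr opprK E.
Qed.

Lemma Es_idem k (u : 'cV[C]_n) : Es k *m (Es k *m u) = Es k *m u.
Proof. by rewrite EsEs // eqxx. Qed.

Lemma S_codesign z F (i : 'I_D.+1) : S z -> inT A x F -> (1 <= i <= t)%N ->
  exists c, Es i *m (F *m z) = c *: a i.
Proof.
move=> Hz HF Hi.
have [ai0|ai0] := eqVneq (a i) 0; first by exists 0; rewrite scale0r; apply: Es_a0.
have aa0 : hdot (a i) (a i) != 0 by apply: contra ai0 => /eqP /hdot_eq0 ->.
set u := Es i *m (F *m z).
set c := hdot u (a i) / hdot (a i) (a i).
set v := u - c *: a i.
have Ev : v = Es i *m (F *m z - c *: a i).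
  by rewrite /v /u mulmxBr -scalemxAr Es_a // eqxx.
have Nvv : Nv v.
  split.
    move=> j; have [->|ji] := eqVneq j i.
      by rewrite /v hdotBl hdotZl /c mulfVK // subrr.
    have ij : (i == j :> nat) = false by apply/eqP => h; move: ji; rewrite (val_inj h) eqxx.
    by rewrite Ev hdot_Es // Es_a // ij hdot0r.
  move=> k Hk; rewrite Ev EsEs //; case: eqP => // ki; exfalso.
  by move: Hk Hi; rewrite ki; case/orP => [/eqP ->|]; lia.
have : hdot v v = 0.
  rewrite {2}/v hdotBr hdotZr (proj1 Nvv i) mulr0 subr0 /u mulmxA hdot_adj'.
  apply: Hz => //; apply: HadjT => //; constructor => //; rewrite -(dualE_Es x HS); constructor.
move/hdot_eq0 => /eqP; rewrite subr_eq0 => /eqP ->; by exists c.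
Qed.

Lemma codesign_S chi : (forall F, inT A x F -> relative_codesign A x t (F *m chi)) -> S chi.
Proof.
move=> H F v HF [Hv1 Hv2]; rewrite hdot_adj (@hdot_Es_sum _ _ _ A x).
apply: big1 => i _.
case: (boolP ((i == 0 :> nat) || (t < i)%N)) => Hi; first by rewrite Hv2 // hdot0l.
have Hi' : (1 <= i <= t)%N by move: Hi; rewrite negb_or => /andP [h1 h2]; move: h1 h2; lia.
rewrite hdot_Es; have := H _ (HadjT HS HF) i Hi'; rewrite dualE_Es // => /dep_span [c ->].
by rewrite hdotZr Hv1 mulr0.
Qed.

Lemma Tmodule_cap (W1 W2 : 'cV[C]_n -> Prop) : Tmodule A x W1 -> Tmodule A x W2 ->
  Tmodule A x (fun u => W1 u /\ W2 u).
Proof.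
move=> [[a0 aD aZ] aT] [[b0 bD bZ] bT]; split; first split.
- by split.
- by move=> u v [? ?] [? ?]; split; [apply: aD | apply: bD].
- by move=> c u [? ?]; split; [apply: aZ | apply: bZ].
- by move=> F u HF [? ?]; split; [apply: aT | apply: bT].
Qed.

Lemma Es0_zero (u : 'cV[C]_n) : u x 0 = 0 -> Es 0 *m u = 0.
Proof.
move=> h; apply/matrixP => y z; rewrite (ord1 z) EsE mxE.
have := dd0 HS x y; case: (x =P y) => [<-|ne] e.
  by rewrite h mulr0.
suff -> : (dd A x y == 0 :> nat) = false by rewrite mul0r.
by apply/negbTE; move: e; rewrite -[(dd A x y == ord0)]/(dd A x y == 0 :> nat) => ->; apply/eqP.
Qed.

Lemma part1 chi :
 (forall W, irreducible_Tmodule A x W -> (exists r : 'I_D.+1, is_endpoint A x W r /\ (1 <= r <= t)%N) ->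
    orthogonal_to chi W)
 <-> (forall F, inT A x F -> relative_codesign A x t (F *m chi)).
Proof.
split => [Hi|Hii].
- have Schi : S chi.
    apply: NNPP => nS.
    have [F [v [HF [Nv' Hne]]]] : exists F v, inT A x F /\ Nv v /\ hdot (F *m v) chi != 0.
      apply: NNPP => h; apply: nS => F v HF Hv; apply: NNPP => h2; apply: h.
      by exists F, v; split => //; split => //; exact/eqP.
    have Hex : exists w, Sperp w /\ hdot w chi != 0.
      by exists (F *m v); split => // s Hs; apply: Hs.
    have [W' [Hirr HW'S [w' [Ww' Hw']]]] := Min (fun G HG => HadjT HS HG) Sperp_T Hex.
    have [[[W'0 W'D W'Z] W'T] _ _] := Hirr.
    have hE0 : forall w, W' w -> Es 0 *m w = 0.
      move=> w Ww; apply: Es0_zero; rewrite -hdot_xhat; apply: HW'S => //; exact: xh_S.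
    have hex : exists i : 'I_D.+1, (1 <= i <= t)%N /\ exists w, W' w /\ Es i *m w != 0.
      apply: NNPP => hn.
      have Sw' : S w'.
        move=> G v1 HG [Hv1 Hv2]; rewrite hdot_adj (@hdot_Es_sum _ _ _ A x).
        apply: big1 => i _.
        case: (boolP ((i == 0 :> nat) || (t < i)%N)) => Hi0; first by rewrite Hv2 // hdot0l.
        have Hi' : (1 <= i <= t)%N by move: Hi0; rewrite negb_or => /andP [h1 h2]; move: h1 h2; lia.
        rewrite hdot_Es; suff -> : Es i *m (adj G *m w') = 0 by rewrite hdot0r.
        apply: NNPP => h3; apply: hn; exists i; split => //; exists (adj G *m w'); split.
          by apply: W'T => //; apply: HadjT.
        exact/eqP.
      have := HW'S w' Ww' w' Sw' => /hdot_eq0 w'0.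
      by move: Hw'; rewrite w'0 hdot0l eqxx.
    have [i [Hit [wi [Wwi Hwi]]]] := hex.
    pose P k := (k <= D)%N /\ exists w, W' w /\ Es k *m w != 0.
    have [r [[rD [wr [Wwr Hwr]]] rmin]] := ex_min (P := P) (k := i) (conj (ltnSE (ltn_ord i)) (ex_intro _ wi (conj Wwi Hwi))).
    have r0 : (0 < r)%N.
      by rewrite lt0n; apply/eqP => r0; move: Hwr; rewrite r0 hE0 ?eqxx.
    have ri : (r <= i)%N.
      by rewrite leqNgt; apply/negP => ir; apply: (rmin i ir); split; [exact: ltnSE (ltn_ord i) | exists wi].
    have := Hi W' Hirr; move/(_ _)/(_ w' Ww') => H; move: Hw'; rewrite H ?eqxx //.
    exists (Ordinal (rD : (r < D.+1)%N)); split; last by rewrite /=; move: Hit r0 ri; lia.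
    split.
      by exists wr; rewrite dualE_Es.
    move=> j jr w Ww; rewrite dualE_Es //; apply: NNPP => h; apply: (rmin j jr); rewrite /P; split.
      exact: ltnSE (ltn_ord j).
    by exists w; split => //; exact/eqP.
  move=> F HF i Hi2; have [c E] := S_codesign Schi HF Hi2.
  rewrite dualE_Es // E; exists 1, (- c); split; first by left; exact: oner_neq0.
  by rewrite scale1r scaleNr subrr.
move=> W [TW [w0 [Ww0 _]] Hirr] [r [[[w1 [Ww1 Hw1]] Hbelow] Hr]].
have Schi := codesign_S Hii.
have [[W0 WD WZ] WT] := TW.
have TU := Tmodule_cap TW Sperp_T.
case: (Hirr _ TU (fun u h => proj1 h)) => [HU0|HWU]; last by move=> w Ww; rewrite (proj2 (HWU w Ww)).
exfalso.
set w2 := dualE A x r *m w1.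
have Ww2 : W w2 by apply: WT => //; constructor.
have [sS HsS] := span_exists S_sub.
have [z [Hz Hor]] := orth_dec sS w2.
have Sz : S z by apply/HsS.
have Hperp : Sperp (w2 - z) by move=> s /HsS; exact: Hor.
have w2E : w2 = Es r *m w2 by rewrite /w2 dualE_Es // Es_idem.
have ar0 : hdot w2 (a r) = 0.
  rewrite aDef hdot_adj' adjA // hdot_xhat -(Es0 x HS).
  have r0 : (@ord0 D < r)%N by case/andP: Hr.
  by rewrite -(@dualE_Es _ _ _ A x HS ord0) Hbelow ?mxE //; apply: WT => //; constructor.
have z0 : z = 0.
  apply: hdot_eq0.
  have -> : hdot z z = hdot w2 z - hdot (w2 - z) z by rewrite hdotBl opprB addrC subrK.
  rewrite (Hperp z Sz) subr0 w2E hdot_Es.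
  have := S_codesign (F := 1%:M) Sz (inT_1 A x) Hr; rewrite mul1mx => -[c ->].
  by rewrite hdotZr ar0 mulr0.
have : w2 = 0 by apply: HU0; split => //; rewrite -(subr0 w2) -z0.
by move/eqP; rewrite (negbTE Hw1).
Qed.


End Part1.

Section Metric.
Variables (C : numClosedFieldType) (n D : nat) (A : 'I_D.+1 -> 'M[C]_n).
Hypothesis HS : is_symmetric_scheme A.
Hypothesis HM : is_metric A.
Hypothesis HD : (1 <= D)%N.
Local Notation A1 := (A (inord 1)).
Local Notation P := (mxpow A1).
Local Notation dd := (dd A).

Lemma mxpowS k : P k.+1 = A1 *m P k. Proof. by []. Qed.

Lemma P_ge0 k y z : 0 <= P k y z.
Proof.
elim: k y z => [|k IH] y z; first by rewrite /mxpow /= mxE ler0n.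
rewrite mxpowS mxE; apply: sumr_ge0 => w _; apply: mulr_ge0; [exact: A_ge0 | exact: IH].
Qed.

Lemma val_inord1 : nat_of_ord (inord 1 : 'I_D.+1) = 1%N.
Proof. by rewrite inordK. Qed.

Lemma dd_metric y z : P (dd y z) y z != 0 /\ forall k, (k < dd y z)%N -> P k y z = 0.
Proof. by have := proj1 (HM (dd y z) y z) (ddP HS y z). Qed.

Lemma P_neq0 k y z : P k y z != 0 -> (dd y z <= k)%N.
Proof.
move=> h; rewrite leqNgt; apply/negP => lt; move: h; by rewrite (proj2 (dd_metric y z) k lt) eqxx.
Qed.

Lemma dd1 y w : (dd y w == 1 :> nat) = (A1 y w == 1).
Proof.
rewrite (AE HS); case: (dd y w =P inord 1) => [->|ne]; first by rewrite val_inord1 !eqxx.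
have -> : (nat_of_ord (dd y w) == 1%N) = false.
  by apply/eqP => h; apply: ne; apply: val_inj; rewrite /= h val_inord1.
by rewrite eq_sym oner_eq0.
Qed.

Lemma sum_pos_neq0 (F : 'I_n -> C) w : (forall u, 0 <= F u) -> 0 < F w -> \sum_u F u != 0.
Proof.
move=> h0 hw; rewrite (bigD1 w) //=; apply/negP => /eqP e.
have : 0 <= \sum_(u | u != w) F u by apply: sumr_ge0 => u _; exact: h0.
have -> : \sum_(u | u != w) F u = - F w by apply/eqP; rewrite -addr_eq0 addrC e.
by rewrite oppr_ge0 => h; have := lt_le_trans hw h; rewrite ltxx.
Qed.

Lemma M1 y w z : (dd y w == 1 :> nat) -> (dd y z <= (dd w z).+1)%N.
Proof.
move=> h1; apply: P_neq0; rewrite mxpowS mxE.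
apply: (sum_pos_neq0 (w := w)) => [u|]; first by apply: mulr_ge0; [exact: A_ge0 | exact: P_ge0].
rewrite dd1 in h1; rewrite (eqP h1) mul1r lt_def P_ge0 andbT; exact: (proj1 (dd_metric w z)).
Qed.

Lemma M1' y w z : (dd y w == 1 :> nat) -> (dd w z <= (dd y z).+1)%N.
Proof. by move=> h; apply: M1; rewrite dd_sym. Qed.

Lemma M2 y z l : (dd y z = l.+1 :> nat) -> exists w, (dd y w == 1 :> nat) /\ (dd w z = l :> nat).
Proof.
move=> h; have := proj1 (dd_metric y z); rewrite h mxpowS mxE.
case: (classic (exists w, A1 y w * P l w z != 0)) => [[w hw]|hn].
  move=> _; have h1 : A1 y w != 0 by apply: contraNneq hw => ->; rewrite mul0r.
  have h2 : P l w z != 0 by apply: contraNneq hw => ->; rewrite mulr0.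
  have hA : A1 y w = 1 by case: (A01 HS (inord 1) y w) h1 => ->; rewrite ?eqxx.
  exists w; split; first by rewrite dd1 hA.
  have := P_neq0 h2; have : (dd y z <= (dd w z).+1)%N by apply: M1; rewrite dd1 hA.
  rewrite h; lia.
rewrite big1 ?eqxx // => w _; apply: NNPP => hw; apply: hn; exists w; exact/eqP.
Qed.

Lemma coefE (d : 'I_D.+1 -> C) y z : (\sum_k d k *: A k) y z = d (dd y z).
Proof.
rewrite summxE (bigD1 (dd y z)) //= mxE (AE HS) eqxx mulr1 big1 ?addr0 // => k ne.
by rewrite mxE (AE HS) eq_sym (negbTE ne) mulr0.
Qed.

Lemma A_pair (k : 'I_D.+1) : exists y z, dd y z = k.
Proof.
apply: NNPP => h; move/eqP: (Anz HS k); apply; apply/matrixP => y z.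
rewrite (AE HS) mxE; case: eqP => // e; exfalso; apply: h; by exists y, z.
Qed.

Definition Poly m (F : 'M[C]_n) := exists c : nat -> C, F = \sum_(i < m) c i *: P i.

Lemma Poly0 m : Poly m 0.
Proof. by exists (fun _ => 0); rewrite big1 // => i _; rewrite scale0r. Qed.
Lemma PolyD m F G : Poly m F -> Poly m G -> Poly m (F + G).
Proof.
move=> [c ->] [c' ->]; exists (fun i => c i + c' i); rewrite -big_split.
by apply: eq_bigr => i _; rewrite scalerDl.
Qed.
Lemma PolyZ m k F : Poly m F -> Poly m (k *: F).
Proof.
move=> [c ->]; exists (fun i => k * c i); rewrite scaler_sumr.
by apply: eq_bigr => i _; rewrite scalerA.
Qed.
Lemma PolyB m F G : Poly m F -> Poly m G -> Poly m (F - G).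
Proof. by move=> h1 h2; apply: PolyD => //; rewrite -scaleN1r; apply: PolyZ. Qed.
Lemma Poly_widen m m' F : (m <= m')%N -> Poly m F -> Poly m' F.
Proof.
move=> hm [c ->]; exists (fun i => if (i < m)%N then c i else 0).
rewrite (big_ord_widen m' (fun i => c i *: P i) hm) big_mkcond /=.
by apply: eq_bigr => i _; case: ifP => _; rewrite ?scale0r.
Qed.
Lemma Poly_mul m F : Poly m F -> Poly m.+1 (A1 *m F).
Proof.
move=> [c ->]; exists (fun i => if i is j.+1 then c j else 0).
rewrite mulmx_sumr big_ord_recl /= scale0r add0r; apply: eq_bigr => i _.
by rewrite -scalemxAr.
Qed.

Lemma Poly_A : forall l (hl : (l < D.+1)%N), Poly l.+1 (A (Ordinal hl)).
Proof.
move=> l; elim/ltn_ind: l => l IH hl.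
case: l IH hl => [|[|l]] IH hl.
- have -> : Ordinal hl = ord0 by apply: val_inj.
  by rewrite (A0E HS); exists (fun _ => 1); rewrite big_ord1 scale1r.
- have -> : Ordinal hl = inord 1 by apply: val_inj; rewrite /= val_inord1.
  rewrite -[A1]mulmx1; apply: Poly_mul.
  by exists (fun _ => 1); rewrite big_ord1 scale1r.
have hl1 : (l.+1 < D.+1)%N by apply: ltnW.
set k2 := Ordinal hl; set k1 : 'I_D.+1 := Ordinal hl1.
have [d Hd] := Aprod HS (inord 1) k1.
have Hdz : forall k : 'I_D.+1, (l.+2 < k)%N -> d k = 0.
  move=> k hk; have [y [z hyz]] := A_pair k.
  rewrite -hyz -coefE -Hd mxE big1 // => w _.
  rewrite !(AE HS); case: eqP => [e1|]; last by rewrite mul0r.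
  case: eqP => [e2|]; last by rewrite mulr0.
  exfalso; have := M1 (y := y) (w := w) z; rewrite e1 e2 val_inord1 eqxx /= => /(_ isT).
  by rewrite hyz; move: hk; lia.
have Hdnz : d k2 != 0.
  have [y [z hyz]] := A_pair k2.
  have [w [hw1 hw2]] := M2 (y := y) (z := z) (l := l.+1) (congr1 val hyz).
  rewrite -hyz -coefE -Hd mxE; apply: (sum_pos_neq0 (w := w)).
    by move=> u; apply: mulr_ge0; exact: A_ge0.
  rewrite !(AE HS).
  have -> : dd y w = inord 1 by apply: val_inj; rewrite /= val_inord1; exact/eqP.
  have -> : dd w z = k1 by apply: val_inj.
  by rewrite !eqxx mulr1 ltr01.
have HA : A k2 = (d k2)^-1 *: (A1 *m A k1 - \sum_(k | k != k2) d k *: A k).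
  by rewrite Hd (bigD1 k2) //= addrK scalerA mulVf // scale1r.
rewrite HA; apply: PolyZ; apply: PolyB.
  by apply: Poly_mul; apply: (IH l.+1).
apply: big_ind => [|F G|k kk2]; [exact: Poly0 | exact: PolyD |].
case: (leqP (val k) l.+1) => hk.
  apply: PolyZ; apply: (Poly_widen (m := (val k).+1)); first by move: hk; lia.
  have := IH (val k) (leq_ltn_trans hk (ltnSn _)) (ltn_ord k).
  by have -> : Ordinal (ltn_ord k) = k by apply: val_inj.
have hk2 : (l.+2 < k)%N.
  rewrite ltn_neqAle hk andbT; apply/eqP => e; move/eqP: kk2; apply; apply: val_inj; by rewrite /= -e.
by rewrite Hdz // scale0r; exact: Poly0.
Qed.

End Metric.

Section Part2.
Variables (C : numClosedFieldType) (n D : nat) (A : 'I_D.+1 -> 'M[C]_n) (x : 'I_n) (t : nat).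
Hypothesis HS : is_symmetric_scheme A.
Hypothesis HM : is_metric A.
Hypothesis Ht : (1 <= t <= D)%N.
Local Notation A1 := (A (inord 1)).
Local Notation P := (mxpow A1).
Local Notation Es := (Es A x).
Local Notation a := (a A x).

Lemma HD : (1 <= D)%N. Proof. by move: Ht; lia. Qed.

Lemma Es_big k (u : 'cV[C]_n) : (D < k)%N -> Es k *m u = 0.
Proof.
move=> hk; apply/matrixP => y z; rewrite (ord1 z) EsE mxE.
suff -> : (dd A x y == k :> nat) = false by rewrite mul0r.
by apply/eqP => e; move: (ltn_ord (dd A x y)); rewrite e; move: hk; lia.
Qed.

Lemma addE (M N : 'cV[C]_n) y : (M + N) y 0 = M y 0 + N y 0.
Proof. by rewrite mxE. Qed.

Lemma tri k (u : 'cV[C]_n) : (1 <= k)%N -> Es k *m u = u ->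
  A1 *m u = Es k.-1 *m (A1 *m u) + Es k *m (A1 *m u) + Es k.+1 *m (A1 *m u).
Proof.
move=> hk hu; apply/matrixP => y j; rewrite (ord1 j) !addE !EsE.
set d := nat_of_ord (dd A x y).
have e01 : (k.-1 == k) = false by apply/eqP; lia.
have e02 : (k.-1 == k.+1) = false by apply/eqP; lia.
have e12 : (k == k.+1) = false by apply/eqP; lia.
case: (boolP ((d == k.-1) || (d == k) || (d == k.+1))).
  have e10 : (k == k.-1) = false by apply/eqP; lia.
  have e20 : (k.+1 == k.-1) = false by apply/eqP; lia.
  have e21 : (k.+1 == k) = false by apply/eqP; lia.
  case/orP => [/orP [/eqP e|/eqP e]|/eqP e]; rewrite e eqxx ?e01 ?e02 ?e12 ?e10 ?e20 ?e21;
    by rewrite ?mul1r ?mul0r ?add0r ?addr0.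
move=> hd.
have -> : (A1 *m u) y 0 = 0.
  rewrite mxE big1 // => z _.
  rewrite -hu EsE (AE HS).
  case: (dd A y z =P inord 1) => [e1|]; last by rewrite mul0r.
  case: eqP => [e2|]; last by rewrite mul0r mulr0.
  exfalso; move: hd.
  have h1 : (dd A y z == 1 :> nat) by rewrite e1 (val_inord1 HD).
  have h2 : (dd A z y == 1 :> nat) by rewrite dd_sym.
  have := M1 HS HM HD x h1; have := M1 HS HM HD x h2.
  rewrite ![dd A _ x]dd_sym // => i1 i2; apply/negP; rewrite negbK /d.
  move: i1 i2 e2; lia.
by rewrite !mulr0 !addr0.
Qed.

Lemma dep_mult (p q : 'cV[C]_n) : lin_dep2 p q -> (q = 0 -> p = 0) -> exists al, p = al *: q.
Proof.
move=> [al [be [nz E]]] hq.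
have [al0|al0] := eqVneq al 0.
  move: nz E; rewrite al0 scale0r add0r => [[]]; rewrite ?eqxx // => be0 /eqP.
  rewrite scaler_eq0 (negbTE be0) /= => /eqP h; exists 0; rewrite scale0r; exact: hq.
exists (- (be / al)); apply: (scalerI al0); rewrite scalerA mulrN mulrCA mulfV // mulr1.
by apply/eqP; rewrite -subr_eq0 scaleNr opprK E.
Qed.

Section Thin.
Variables (W : 'cV[C]_n -> Prop) (r : 'I_D.+1) (w1 : 'cV[C]_n).
Hypothesis TW : Tmodule A x W.
Hypothesis Ww1 : W w1.
Hypothesis Hw1 : dualE A x r *m w1 != 0.
Hypothesis Hbelow : forall i : 'I_D.+1, (i < r)%N -> forall w, W w -> dualE A x i *m w = 0.
Hypothesis Hr : (1 <= r <= t)%N.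
Hypothesis Hthin : thin A x W.
Hypothesis Hirr : forall U, Tmodule A x U -> (forall u, U u -> W u) ->
  (forall u, U u -> u = 0) \/ (forall w, W w -> U w).

Let w0 := Es r *m w1.
Fixpoint ws (j : nat) : 'cV[C]_n := if j is j'.+1 then Es (r + j) *m (A1 *m ws j') else w0.

Lemma W0 : W 0. Proof. by case: TW => [[h _ _] _]. Qed.
Lemma WD u v : W u -> W v -> W (u + v). Proof. by case: TW => [[_ h _] _]; apply: h. Qed.
Lemma WZ c u : W u -> W (c *: u). Proof. by case: TW => [[_ _ h] _]; apply: h. Qed.
Lemma WT F u : inT A x F -> W u -> W (F *m u). Proof. by case: TW => _; apply. Qed.

Lemma WEs k v : W v -> W (Es k *m v).
Proof.
move=> Wv; case: (leqP k D) => hk; last by rewrite Es_big //; exact: W0.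
have -> : Es k = dualE A x (inord k) by rewrite dualE_Es // inordK.
by apply: WT => //; constructor.
Qed.
Lemma WA1 v : W v -> W (A1 *m v). Proof. by move=> Wv; apply: WT => //; constructor. Qed.

Lemma W_ws j : W (ws j).
Proof. by elim: j => [|j IH] /=; [apply: WEs | apply: WEs; apply: WA1]. Qed.

Lemma ws_E j : Es (r + j) *m ws j = ws j.
Proof. by case: j => [|j] /=; rewrite ?addn0 Es_idem. Qed.

Lemma ws_big j : (D < r + j)%N -> ws j = 0.
Proof. by move=> h; rewrite -ws_E Es_big. Qed.

Lemma thinE k u v : W u -> W v -> lin_dep2 (Es k *m u) (Es k *m v).
Proof.
move=> Wu Wv; case: (leqP k D) => hk.
  have -> : Es k = dualE A x (inord k) by rewrite dualE_Es // inordK.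
  exact: Hthin.
rewrite !Es_big //; exists 1, 0; split; first by left; exact: oner_neq0.
by rewrite !scaler0 addr0.
Qed.

Lemma alpha j : exists al, Es (r + j) *m (A1 *m ws j) = al *: ws j.
Proof.
apply: dep_mult; first by rewrite -{2}ws_E; apply: thinE; [apply: WA1 |]; apply: W_ws.
by move=> ->; rewrite mulmx0 mulmx0.
Qed.

Lemma beta j : exists be, Es (r + j) *m (A1 *m ws j.+1) = be *: ws j.
Proof.
apply: dep_mult; first by rewrite -(ws_E j); apply: thinE; [apply: WA1 |]; apply: W_ws.
by move=> h /=; rewrite h !mulmx0.
Qed.

Lemma r_pos : (1 <= r)%N. Proof. by case/andP: Hr. Qed.

Lemma beta0 : Es r.-1 *m (A1 *m ws 0) = 0.
Proof.
have hr : (r.-1 < D.+1)%N by move: (ltn_ord r); lia.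
have -> : Es r.-1 = dualE A x (Ordinal hr) by rewrite dualE_Es.
apply: Hbelow; first by rewrite /=; move: r_pos; lia.
by apply: WA1; apply: W_ws.
Qed.

Lemma tri_ws j : A1 *m ws j = Es (r + j).-1 *m (A1 *m ws j) + Es (r + j) *m (A1 *m ws j) + ws j.+1.
Proof.
rewrite /= addnS; apply: tri; first by move: r_pos; lia.
exact: ws_E.
Qed.

Definition Y (y : 'cV[C]_n) := exists c : nat -> C, y = \sum_(j < D.+1) c j *: ws j.

Lemma Y0 : Y 0.
Proof. by exists (fun _ => 0); rewrite big1 // => j _; rewrite scale0r. Qed.
Lemma YD u v : Y u -> Y v -> Y (u + v).
Proof.
move=> [c ->] [c' ->]; exists (fun j => c j + c' j); rewrite -big_split.
by apply: eq_bigr => j _; rewrite scalerDl.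
Qed.
Lemma YZ k u : Y u -> Y (k *: u).
Proof.
move=> [c ->]; exists (fun j => k * c j); rewrite scaler_sumr.
by apply: eq_bigr => j _; rewrite scalerA.
Qed.
Lemma Y_sum (I : finType) (f : I -> 'cV[C]_n) : (forall i, Y (f i)) -> Y (\sum_i f i).
Proof. by move=> h; apply: big_ind => //; [exact: Y0 | exact: YD]. Qed.
Lemma Y_ws j : Y (ws j).
Proof.
case: (ltnP j D.+1) => hj.
  exists (fun i => (i == j)%:R); rewrite (bigD1 (Ordinal hj)) //= eqxx scale1r big1 ?addr0 //.
  move=> i ne; suff -> : (nat_of_ord i == j) = false by rewrite scale0r.
  by apply/eqP => e; move/eqP: ne; apply; apply: val_inj.
by rewrite ws_big; [exact: Y0 | move: hj; lia].
Qed.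

Lemma Y_A1ws j : Y (A1 *m ws j).
Proof.
rewrite tri_ws; have [al ->] := alpha j.
case: j => [|j].
  by rewrite addn0 beta0 add0r; apply: YD; [apply: YZ |]; apply: Y_ws.
rewrite addnS -pred_Sn; have [be ->] := beta j.
by apply: YD; [apply: YD; apply: YZ |]; apply: Y_ws.
Qed.

Lemma Y_A1 y : Y y -> Y (A1 *m y).
Proof.
move=> [c ->]; rewrite mulmx_sumr; apply: Y_sum => j.
by rewrite -scalemxAr; apply: YZ; apply: Y_A1ws.
Qed.

Lemma Y_Es k y : Y y -> Y (Es k *m y).
Proof.
move=> [c ->]; rewrite mulmx_sumr; apply: Y_sum => j.
rewrite -scalemxAr; apply: YZ; rewrite -ws_E EsEs; case: ifP => _; [rewrite ws_E; apply: Y_ws | exact: Y0].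
Qed.

Lemma Y_P m y : Y y -> Y (P m *m y).
Proof. by elim: m y => [|m IH] y Yy; [rewrite /mxpow /= mul1mx | rewrite mxpowS -mulmxA; apply: Y_A1; apply: IH]. Qed.

Lemma Y_Poly m F y : Poly A m F -> Y y -> Y (F *m y).
Proof.
move=> [c ->] Yy; rewrite mulmx_suml; apply: Y_sum => i.
by rewrite -scalemxAl; apply: YZ; apply: Y_P.
Qed.

Lemma Y_A l y : Y y -> Y (A l *m y).
Proof.
move=> Yy; have := Poly_A HS HM HD (ltn_ord l).
have -> : Ordinal (ltn_ord l) = l by apply: val_inj.
by move=> hP; apply: Y_Poly hP Yy.
Qed.

Lemma TY : Tmodule A x Y.
Proof.
split; first split; [exact: Y0 | exact: YD | exact: YZ |].
move=> F u HF; elim: HF u => [i|i||F1 G1 _ h1 _ h2|c F1 _ h|F1 G1 _ h1 _ h2] u Yu.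
- exact: Y_A.
- by rewrite dualE_Es //; apply: Y_Es.
- by rewrite mul1mx.
- by rewrite mulmxDl; apply: YD; [apply: h1 | apply: h2].
- by rewrite -scalemxAl; apply: YZ; apply: h.
- by rewrite -mulmxA; apply: h1; apply: h2.
Qed.

Definition MW (u : 'cV[C]_n) := exists c : 'I_D.+1 -> C, u = \sum_l c l *: (A l *m w0).
Lemma MW0 : MW 0.
Proof. by exists (fun _ => 0); rewrite big1 // => j _; rewrite scale0r. Qed.
Lemma MWD u v : MW u -> MW v -> MW (u + v).
Proof.
move=> [c ->] [c' ->]; exists (fun j => c j + c' j); rewrite -big_split.
by apply: eq_bigr => j _; rewrite scalerDl.
Qed.
Lemma MWZ k u : MW u -> MW (k *: u).
Proof.
move=> [c ->]; exists (fun j => k * c j); rewrite scaler_sumr.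
by apply: eq_bigr => j _; rewrite scalerA.
Qed.
Lemma MWB u v : MW u -> MW v -> MW (u - v).
Proof. by move=> h1 h2; apply: MWD => //; rewrite -scaleN1r; apply: MWZ. Qed.
Lemma MW_sum (I : finType) (f : I -> 'cV[C]_n) : (forall i, MW (f i)) -> MW (\sum_i f i).
Proof. by move=> h; apply: big_ind => //; [exact: MW0 | exact: MWD]. Qed.
Lemma MW_Aw l : MW (A l *m w0).
Proof.
exists (fun k => (k == l)%:R); rewrite (bigD1 l) //= eqxx scale1r big1 ?addr0 // => k kl.
by rewrite (negbTE kl) scale0r.
Qed.
Lemma MW_A1 u : MW u -> MW (A1 *m u).
Proof.
move=> [c ->]; rewrite mulmx_sumr; apply: MW_sum => l.
rewrite -scalemxAr; apply: MWZ; have [d Hd] := Aprod HS (inord 1) l.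
rewrite mulmxA Hd mulmx_suml; apply: MW_sum => k.
by rewrite -scalemxAl; apply: MWZ; apply: MW_Aw.
Qed.

Lemma ws_MW j : MW (ws j) /\ MW (ws j.+1).
Proof.
have E : forall j, ws j.+1 = A1 *m ws j - (Es (r + j).-1 *m (A1 *m ws j) + Es (r + j) *m (A1 *m ws j)).
  by move=> i; rewrite {1}tri_ws addrC addKr.
have MWw0 : MW w0 by rewrite -[w0]mul1mx -(A0E HS); apply: MW_Aw.
elim: j => [|j [IH1 IH2]].
  split => //; rewrite E; have [al ->] := alpha 0; rewrite addn0 beta0 add0r.
  by apply: MWB; [apply: MW_A1 | apply: MWZ].
split => //; rewrite E; have [al ->] := alpha j.+1.
rewrite addnS -pred_Sn; have [be ->] := beta j.
by apply: MWB; [apply: MW_A1 | apply: MWD; apply: MWZ].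
Qed.

Variable chi : 'cV[C]_n.
Hypothesis Hcod : forall l : 'I_D.+1, relative_codesign A x t (A l *m chi).

Lemma hdot_w0_a : hdot w0 (a r) = 0.
Proof.
rewrite aDef hdot_adj' adjA // hdot_xhat -(Es0 x HS).
have r0 : (@ord0 D < r)%N by exact: r_pos.
rewrite -(@dualE_Es _ _ _ A x HS ord0) Hbelow ?mxE //.
by apply: WT; [constructor | apply: W_ws 0].
Qed.

Lemma MW_orth u : MW u -> hdot u chi = 0.
Proof.
move=> [c ->]; rewrite (big_morph (fun w => hdot w chi) (fun p q => hdotDl p q chi) (hdot0l chi)).
apply: big1 => l _; rewrite hdotZl hdot_adj adjA //.
have ew : w0 = Es r *m w0 by rewrite /w0 Es_idem.
rewrite {1}ew hdot_Es; have := Hcod l Hr; rewrite dualE_Es // => h; have [c' ->] := dep_span HS h.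
by rewrite hdotZr hdot_w0_a !mulr0.
Qed.

Lemma thin_orth : forall w, W w -> hdot w chi = 0.
Proof.
have Yorth : forall y, Y y -> hdot y chi = 0.
  move=> y [c ->]; rewrite (big_morph (fun w => hdot w chi) (fun p q => hdotDl p q chi) (hdot0l chi)).
  by apply: big1 => j _; rewrite hdotZl MW_orth ?mulr0 //; case: (ws_MW j).
case: (Hirr (Tmodule_cap TW TY) (fun u h => proj1 h)) => [H0|HWY].
  exfalso; have : ws 0 = 0 by apply: H0; split; [apply: W_ws | apply: Y_ws].
  by move/eqP; rewrite /= /w0 -dualE_Es // (negbTE Hw1).
by move=> w Ww; apply: Yorth; case: (HWY w Ww).
Qed.

End Thin.

End Part2.

Theorem lemma3p4 (C : numClosedFieldType) (n D : nat)
  (A : 'I_D.+1 -> 'M[C]_n) (x : 'I_n) (t : nat) :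
  is_symmetric_scheme A -> is_metric A -> (1 <= t <= D)%N ->
  (forall chi : 'cV[C]_n,
     (forall W, irreducible_Tmodule A x W ->
        (exists r : 'I_D.+1, is_endpoint A x W r /\ (1 <= r <= t)%N) ->
        orthogonal_to chi W)
     <-> (forall F, inT A x F -> relative_codesign A x t (F *m chi)))
  /\
  ((forall W, irreducible_Tmodule A x W ->
      (exists r : 'I_D.+1, is_endpoint A x W r /\ (r <= t)%N) -> thin A x W) ->
   forall chi : 'cV[C]_n,
     (forall l : 'I_D.+1, relative_codesign A x t (A l *m chi)) ->
     (forall W, irreducible_Tmodule A x W ->
        (exists r : 'I_D.+1, is_endpoint A x W r /\ (1 <= r <= t)%N) ->
        orthogonal_to chi W)).
Proof.
move=> HS HM Ht; split.
  by move=> chi; apply: part1.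
move=> Hthin chi Hcod W HW [r [Hend Hr]].
have Hth : thin A x W.
  by apply: Hthin => //; exists r; split => //; case/andP: Hr.
case: HW => TW _ Hirr; case: Hend => [[w1 [Ww1 Hw1]] Hbelow].
move=> w Ww; exact: (thin_orth HS HM Ht TW Ww1 Hw1 Hbelow Hr Hth Hirr Hcod Ww).
Qed.
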